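(* Let $K=(C,\langle Q_i,1\le i\le k\rangle)$ and $K'=(C',\langle Q'_j,1\le j\le l\rangle)$ be two CMIs on $X_1,\dots,X_n$, both in pure form. Then $K\sim K'$ if and only if $\mathrm{can}(K)=\mathrm{can}(K')$.
   Context: Setting: $X_1,\dots,X_n$ are jointly distributed discrete random variables with $H(X_i)<\infty$ for all $i$; the joint distribution is otherwise unspecified. Write $\mathcal N_n=\{1,\dots,n\}$, $X_\alpha=(X_i,i\in\alpha)$ for $\alpha\subseteq\mathcal N_n$, and $X_\emptyset$ is a constant. A CMI (conditional mutual independency) is a pair $K=(C,\langle Q_1,\dots,Q_k\rangle)$ with $k\ge 0$, $C\subseteq\mathcal N_n$ and $\langle Q_1,\dots,Q_k\rangle$ an unordered finite collection (multiset: repetitions allowed, order immaterial) of subsets of $\mathcal N_n$. For a given joint distribution, $K$ is valid if $\sum_{i=1}^k H(X_{Q_i}|X_C)-H(X_{Q_1},\dots,X_{Q_k}|X_C)=0$ (automatic when $k\le 1$). Members $Q_j=\emptyset$ may be deleted without changing the CMI. Two CMIs are equal if their conditioning sets are equal and their collections are equal as multisets. $K\sim K'$ means: for every joint distribution of $X_1,\dots,X_n$, $K$ and $K'$ are both valid or both invalid. $K$ is degenerate if it is valid for every joint distribution; all degenerate CMIs are identified and denoted $(\cdot,\langle\ \rangle)$. Pure form: $K$ is in pure form if $Q_i\ne\emptyset$ and $Q_i\cap C=\emptyset$ for all $i$. Canonical form of a pure $K=(C,\langle Q_1,\dots,Q_k\rangle)$: if $k\ge2$, let $\mathbb I_K$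 be the set of indices $q$ lying in at least two members $Q_{i},Q_{i'}$ ($i\ne i'$) of the collection; if $k\le1$, $\mathbb I_K=\emptyset$. Let $P_1,\dots,P_t$ be the nonempty sets among $Q_1\setminus\mathbb I_K,\dots,Q_k\setminus\mathbb I_K$ (with multiplicity). Then $\mathrm{can}(K)=(\cdot,\langle\ \rangle)$ if $k\in\{0,1\}$; $\mathrm{can}(K)=(C,\langle\mathbb I_K,\mathbb I_K\rangle)$ if $k\ge2$, $\mathbb I_K\ne\emptyset$, $t\in\{0,1\}$; $\mathrm{can}(K)=(C,\langle P_1,\dots,P_t\rangle)$ if $k\ge2$, $\mathbb I_K=\emptyset$; $\mathrm{can}(K)=(C,\langle\mathbb I_K,\mathbb I_K,P_1,\dots,P_t\rangle)$ if $k\ge2$, $\mathbb I_K\ne\emptyset$, $t\ge2$. *)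

(* Defs.v *)
From HB Require Import structures.
From mathcomp Require Import all_boot all_order all_algebra.
From mathcomp Require Import all_classical all_reals.
From mathcomp Require Import ereal esum exp.
Set Implicit Arguments. Unset Strict Implicit. Unset Printing Implicit Defensive.
Import Order.TTheory GRing.Theory Num.Theory.
Local Open Scope classical_set_scope.
Local Open Scope ring_scope.

Section CMI.
Variables (R : realType) (n : nat).

(* An outcome of (X_1,...,X_n): each X_i is discrete, its countable range is
   encoded injectively into nat. *)
Definition outcome := {ffun 'I_n -> nat}.

Definition is_pmf (p : outcome -> R) : Prop :=
  (forall x, 0 <= p x) /\ (\esum_(x in [set: outcome]) (p x)%:E = 1)%E.

Definition marg (p : outcome -> R) (A : {set 'I_n}) (y : outcome) : R :=
  fine (\esum_(x in [set x : outcome | forall i, i \in A -> x i = y i]) (p x)%:E).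

(* Entropy H(X_A) (natural log), possibly +oo.  Values of X_A are encoded as
   outcomes vanishing outside A. *)
Definition entropy (p : outcome -> R) (A : {set 'I_n}) : \bar R :=
  \esum_(y in [set y : outcome | forall i, i \notin A -> y i = 0])
     (- (marg p A y * ln (marg p A y)))%:E.

Definition finite_entropies (p : outcome -> R) : Prop :=
  forall i : 'I_n, (entropy p (finset.set1 i) < +oo)%E.

(* A CMI (C, <Q_1,...,Q_k>); the multiset is represented by a sequence,
   multiset equality being perm_eq. *)
Definition CMI := ({set 'I_n} * seq {set 'I_n})%type.

Definition centropy (p : outcome -> R) (A C : {set 'I_n}) : \bar R :=
  (entropy p (A :|: C) - entropy p C)%E.

Definition valid (p : outcome -> R) (K : CMI) : Prop :=
  (\sum_(Q <- K.2) centropy p Q K.1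
     - centropy p (\big[@finset.setU _/finset.set0]_(Q <- K.2) Q) K.1 = 0)%E.

Definition cmi_equiv (K K' : CMI) : Prop :=
  forall p : outcome -> R, is_pmf p -> finite_entropies p ->
    (valid p K <-> valid p K').

End CMI.

Section Canonical.
Local Close Scope classical_set_scope.
Variable n : nat.

Definition pure (K : CMI n) : bool :=
  all (fun Q => (Q != finset.set0) && [disjoint Q & K.1]) K.2.

Definition IK (K : CMI n) : {set 'I_n} :=
  [set q : 'I_n | (1 < count (fun Q : {set 'I_n} => q \in Q) K.2)%N].

Definition PK (K : CMI n) : seq {set 'I_n} :=
  seq.filter (fun P => P != finset.set0) (map (fun Q => Q :\: IK K) K.2).

(* canonical form; None stands for the degenerate CMI (.,< >) *)
Definition canform (K : CMI n) : option (CMI n) :=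
  if (size K.2 <= 1)%N then None
  else if IK K == finset.set0 then Some (K.1, PK K)
  else if (size (PK K) <= 1)%N then Some (K.1, [:: IK K; IK K])
  else Some (K.1, IK K :: IK K :: PK K).

Definition cmi_eq (K K' : CMI n) : bool := (K.1 == K'.1) && perm_eq K.2 K'.2.

Definition canform_eq (c c' : option (CMI n)) : bool :=
  match c, c' with
  | None, None => true
  | Some K, Some K' => cmi_eq K K'
  | _, _ => false
  end.

End Canonical.

(* Main.v *)
Require Import Defs.
From HB Require Import structures.
From mathcomp Require Import all_boot all_order all_algebra.
From mathcomp Require Import all_classical all_reals.
From mathcomp Require Import ereal esum exp.
From mathcomp Require Import ring lra zify.
Set Implicit Arguments. Unset Strict Implicit. Unset Printing Implicit Defensive.
Import Order.TTheory GRing.Theory Num.Theory.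
From mathcomp Require Import finset.
Section Poly.
Local Open Scope ring_scope.
Variables (R : realType) (n : nat) (h : {set 'I_n} -> R).
Hypotheses (h0 : h set0 = 0)
  (hmono : forall A B : {set 'I_n}, A \subset B -> h A <= h B)
  (hsub : forall A B : {set 'I_n}, h (A :|: B) + h (A :&: B) <= h A + h B).

Definition bigU (s : seq {set 'I_n}) := \big[@setU _/set0]_(Q <- s) Q.

Lemma bigU_cons Q s : bigU (Q :: s) = Q :|: bigU s.
Proof. by rewrite /bigU big_cons. Qed.

Lemma mem_bigU x s : (x \in bigU s) = has (fun Q : {set 'I_n} => x \in Q) s.
Proof.
elim: s => [|Q s IH]; first by rewrite /bigU big_nil in_set0.
by rewrite bigU_cons in_setU IH.
Qed.

Definition validR (K : CMI n) : Prop :=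
  \sum_(Q <- K.2) (h (Q :|: K.1) - h K.1) - (h (bigU K.2 :|: K.1) - h K.1) = 0.

Section F.
Variable C : {set 'I_n}.
Implicit Types X Y I : {set 'I_n}.
Definition fC X := h (X :|: C) - h C.

Lemma f0 : fC set0 = 0.
Proof. by rewrite /fC set0U subrr. Qed.
Lemma fge0 X : 0 <= fC X.
Proof. by rewrite /fC subr_ge0 hmono // subsetUr. Qed.
Lemma fmono X Y : X \subset Y -> fC X <= fC Y.
Proof. by move=> XY; rewrite /fC lerD2r hmono // setSU. Qed.
Lemma fsub X Y : fC (X :|: Y) + fC (X :&: Y) <= fC X + fC Y.
Proof.
rewrite /fC.
have -> : X :|: Y :|: C = (X :|: C) :|: (Y :|: C).
  by rewrite setUACA setUid.
have -> : X :&: Y :|: C = (X :|: C) :&: (Y :|: C) by rewrite setUIl.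
have := hsub (X :|: C) (Y :|: C); lra.
Qed.

Definition Iset (s : seq {set 'I_n}) : {set 'I_n} :=
  [set q : 'I_n | (1 < count (fun Q : {set 'I_n} => q \in Q) s)%N].

Lemma Iset_cons Q s : Iset (Q :: s) = Iset s :|: (Q :&: bigU s).
Proof.
apply/setP => q; rewrite !inE mem_bigU has_count /=.
by case: (q \in Q) => /=; case: (count _ s) => [|[|m]].
Qed.

Lemma chain s : fC (bigU s) + fC (Iset s) <= \sum_(Q <- s) fC Q.
Proof.
elim: s => [|Q s IH].
  rewrite big_nil /bigU big_nil.
  have -> : Iset [::] = set0 by apply/setP => q; rewrite !inE.
  by rewrite f0 addr0.
rewrite big_cons bigU_cons Iset_cons.
have h1 := fsub Q (bigU s).
have h2 := fsub (Iset s) (Q :&: bigU s).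
have h3 := fge0 (Iset s :&: (Q :&: bigU s)).
lra.
Qed.

Lemma absorb I X : fC I = 0 -> fC (X :|: I) = fC X.
Proof.
move=> fI; have h1 := fsub X I; have h2 := fge0 (X :&: I).
have h3 := fmono (subsetUl X I); lra.
Qed.

Lemma absorbD I X : fC I = 0 -> fC X = fC (X :\: I).
Proof.
move=> fI; rewrite -(absorb X fI) -(absorb (X :\: I) fI).
congr fC; apply/setP => x; rewrite !inE; by case: (x \in I); case: (x \in X).
Qed.

Lemma subadd X Y : fC (X :|: Y) <= fC X + fC Y.
Proof. have := fsub X Y; have := fge0 (X :&: Y); lra. Qed.

Lemma subadd_seq s : fC (bigU s) <= \sum_(Q <- s) fC Q.
Proof. have := chain s; have := fge0 (Iset s); lra. Qed.

Definition PKs (s : seq {set 'I_n}) :=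
  seq.filter (fun P => P != set0) (map (fun Q => Q :\: Iset s) s).

Lemma sum_PKs s : \sum_(P <- PKs s) fC P = \sum_(Q <- s) fC (Q :\: Iset s).
Proof.
rewrite /PKs bigop.big_filter big_mkcond big_map /=.
by apply: eq_bigr => Q _; case: eqP => // ->; rewrite f0.
Qed.

Lemma bigU_filter (s : seq {set 'I_n}) : bigU (seq.filter (fun P => P != set0) s) = bigU s.
Proof.
elim: s => [|Q s IH] //=; case: eqP => [->|_]; rewrite !bigU_cons IH //.
by rewrite set0U.
Qed.


Lemma bigU_mapD (s : seq {set 'I_n}) I : bigU (map (fun Q => Q :\: I) s) = bigU s :\: I.
Proof.
elim: s => [|Q s IH]; first by rewrite /bigU !big_nil set0D.
by rewrite /= !bigU_cons IH setDUl.
Qed.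

Lemma bigU_PKs s : bigU (PKs s) = bigU s :\: Iset s.
Proof. by rewrite /PKs bigU_filter bigU_mapD. Qed.

Lemma valid_fC s : validR (C, s) <-> \sum_(Q <- s) fC Q = fC (bigU s).
Proof.
rewrite /validR /=; split => [/eqP|->]; last by rewrite subrr.
by rewrite subr_eq0 => /eqP.
Qed.

Lemma valid_main s : validR (C, s) <->
  fC (Iset s) = 0 /\ \sum_(P <- PKs s) fC P = fC (bigU (PKs s)).
Proof.
rewrite valid_fC sum_PKs bigU_PKs; split.
  move=> E; have h1 := chain s; have h2 := fge0 (Iset s).
  have fI : fC (Iset s) = 0 by lra.
  split => //; rewrite -absorbD // -E.
  by apply: eq_bigr => Q _; rewrite -absorbD.
move=> [fI E]; rewrite (absorbD (bigU s) fI) -E.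
by apply: eq_bigr => Q _; rewrite -absorbD.
Qed.

Lemma valid_II I s : validR (C, [:: I, I & s]) <->
  fC I = 0 /\ \sum_(P <- s) fC P = fC (bigU s).
Proof.
rewrite valid_fC !big_cons !bigU_cons setUA setUid; split.
  move=> E; have h1 := subadd I (bigU s); have h2 := subadd_seq s.
  have h3 := fge0 I.
  have fI : fC I = 0 by lra.
  by split => //; move: E; rewrite setUC absorb // fI !add0r.
by move=> [fI E]; rewrite setUC absorb // fI !add0r.
Qed.

End F.

Definition Vc (c : option (CMI n)) : Prop :=
  if c is Some K0 then validR K0 else True.

Lemma valid_triv (K : CMI n) : (size K.2 <= 1)%N -> validR K.
Proof.
case: K => C [|Q [|Q' s]] //= _; rewrite /validR /=.
  by rewrite big_nil /bigU big_nil set0U subrr subrr.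
by rewrite big_cons big_nil bigU_cons /bigU big_nil setU0 addr0 subrr.
Qed.

Lemma IK_Iset (K : CMI n) : IK K = Iset K.2.
Proof. by []. Qed.
Lemma PK_PKs (K : CMI n) : PK K = PKs K.2.
Proof. by []. Qed.

Lemma sum_small C s : (size s <= 1)%N ->
  \sum_(P <- s) fC C P = fC C (bigU s).
Proof.
case: s => [|Q [|Q' s]] //= _.
  by rewrite big_nil /bigU big_nil f0.
by rewrite big_cons big_nil bigU_cons /bigU big_nil setU0 addr0.
Qed.

Lemma valid_can (K : CMI n) : validR K <-> Vc (canform K).
Proof.
case: K => C s; rewrite /canform /=.
case: ifP => [sz|_]; first by split => // _; exact: valid_triv.
rewrite valid_main IK_Iset PK_PKs /=.
case: ifP => [/eqP I0|_] /=.
  rewrite I0 f0 valid_fC; split; [by case|by split].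
case: ifP => [sz|_] /=.
  rewrite (valid_II C (Iset s) [::]) (sum_small _ sz) big_nil /bigU big_nil f0.
  by split; case.
by rewrite valid_II.
Qed.

Lemma Vc_eq c c' : canform_eq c c' -> (Vc c <-> Vc c').
Proof.
case: c => [[C s]|]; case: c' => [[C' s']|] //= /andP[/= /eqP <- ps].
rewrite /validR /= (perm_big _ ps) /=.
by rewrite /bigU (perm_big _ ps).
Qed.

End Poly.
Section Comb.
Variable n : nat.
Implicit Types (T P Q X : {set 'I_n}) (L s : seq {set 'I_n}) (K : CMI n).

Definition vT T K : bool :=
  (T :&: K.1 != set0) || (count (fun Q : {set 'I_n} => T :&: Q != set0) K.2 <= 1)%N.

Definition sameL L (x y : 'I_n) :=
  has (fun P : {set 'I_n} => (x \in P) && (y \in P)) L.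

Definition partL L := (forall P, P \in L -> P != set0) /\
  (forall x, count (fun P : {set 'I_n} => x \in P) L <= 1)%N.

Lemma pureP K : pure K -> forall Q, Q \in K.2 -> Q != set0 /\ [disjoint Q & K.1].
Proof. by move=> /allP H Q /H /andP. Qed.

Lemma notC K x Q : pure K -> Q \in K.2 -> x \in Q -> x \notin K.1.
Proof. by move=> pK QK xQ; have [_ d] := pureP pK QK; rewrite (disjointFr d xQ). Qed.

Lemma mem_bigU' x s : (x \in bigU s) = has (fun Q : {set 'I_n} => x \in Q) s.
Proof. exact: mem_bigU. Qed.

Lemma setI1_neq0 x Q : ([set x] :&: Q != set0) = (x \in Q).
Proof.
apply/set0Pn/idP => [[z]|xQ]; last by exists x; rewrite !inE eqxx xQ.
by rewrite !inE => /andP[/eqP-> ].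
Qed.

Lemma setI2_neq0 x y Q : ([set x; y] :&: Q != set0) = (x \in Q) || (y \in Q).
Proof.
apply/set0Pn/orP => [[z]|[xQ|yQ]].
- by rewrite !inE => /andP[/orP[/eqP->|/eqP->] zQ]; [left|right].
- by exists x; rewrite !inE eqxx xQ.
- by exists y; rewrite !inE eqxx orbT yQ.
Qed.

Lemma vT0 T K : (size K.2 <= 1)%N -> vT T K.
Proof. by move=> s1; rewrite /vT (leq_trans (count_size _ _)) ?orbT. Qed.

Lemma vT1 T K : pure K -> T :&: K.1 = set0 -> ~: K.1 \subset T ->
  vT T K = (size K.2 <= 1)%N.
Proof.
move=> pK TC CT; rewrite /vT TC eqxx /=; congr (_ <= 1)%N; apply/eqP.
rewrite -all_count; apply/allP => Q QK; have [Q0 dQ] := pureP pK QK.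
move: dQ; rewrite disjoints_subset => QC.
by rewrite (setIidPr (fintype.subset_trans QC CT)).
Qed.

Lemma Csub K K' : pure K -> pure K' -> (2 <= size K'.2)%N ->
  (forall T, vT T K = vT T K') -> K.1 \subset K'.1.
Proof.
move=> pK pK' s2 Hv; apply/fintype.subsetP => c cC; apply/negPn/negP => cC'.
have := Hv (c |: ~: K'.1).
rewrite (vT1 pK'); last first.
- exact: subsetUr.
- apply/setP => z; rewrite !inE; case: eqP => [->|_] /=; first by rewrite (negPf cC').
  by case: (z \in K'.1).
rewrite /vT; have -> : (c |: ~: K'.1) :&: K.1 != set0.
  by apply/set0Pn; exists c; rewrite !inE eqxx cC.
by rewrite /= leqNgt s2.
Qed.

Lemma vT1x x K : vT [set x] K =
  (x \in K.1) || (count (fun Q : {set 'I_n} => x \in Q) K.2 <= 1)%N.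
Proof.
rewrite /vT setI1_neq0; congr (_ || (_ <= 1)%N); apply: eq_count => Q.
exact: setI1_neq0.
Qed.

Lemma Isub K K' : pure K -> pure K' ->
  (forall T, vT T K = vT T K') -> IK K \subset IK K'.
Proof.
move=> pK pK' Hv; apply/fintype.subsetP => x; rewrite !inE => c2.
have : has (fun Q : {set 'I_n} => x \in Q) K.2 by rewrite has_count (ltn_trans _ c2).
move=> /hasP[Q QK xQ]; have xC := notC pK QK xQ.
have := Hv [set x]; rewrite !vT1x (negPf xC) /= leqNgt c2 /=.
by case: (x \in K'.1) => //= /esym; rewrite leqNgt => /negbFE.
Qed.

Lemma arith (a b c co : nat) : (a <= 1)%N -> (b <= 1)%N -> (c <= a)%N -> (c <= b)%N ->
  co + c = a + b -> (co <= 1)%N = ~~ [&& (0 < a)%N, (0 < b)%N & ~~ (0 < c)%N].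
Proof.
move=> ha hb hc hc' e; have -> : co = (a + b - c)%N by lia.
clear e.
by move: ha hb hc hc'; case: a => [|[|//]]; case: b => [|[|//]]; case: c => [|[|//]].
Qed.

Lemma inPK K x : x \notin IK K ->
  (x \in bigU (PK K)) = has (fun Q : {set 'I_n} => x \in Q) K.2.
Proof. by move=> xI; rewrite PK_PKs bigU_PKs in_setD -IK_Iset (negPf xI) mem_bigU. Qed.

Lemma samePK K x y : x \notin IK K -> y \notin IK K ->
  sameL (PK K) x y = has (fun Q : {set 'I_n} => (x \in Q) && (y \in Q)) K.2.
Proof.
rewrite /sameL PK_PKs /PKs -IK_Iset => xI yI.
elim: K.2 => [|Q s IH] //=.
case: ifP => [_|/negbFE/eqP Q0] /=; first by rewrite IH !in_setD (negPf xI) (negPf yI).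
rewrite IH; case xQ: (x \in Q) => //=.
by move: Q0 => /setP/(_ x); rewrite in_setD in_set0 xQ (negPf xI).
Qed.

Lemma vT_pair K x y : pure K -> x \notin IK K -> y \notin IK K ->
  x \notin K.1 -> y \notin K.1 ->
  vT [set x; y] K = ~~ [&& x \in bigU (PK K), y \in bigU (PK K) & ~~ sameL (PK K) x y].
Proof.
move=> pK xI yI xC yC.
rewrite /vT setI2_neq0 (negPf xC) (negPf yC) /=.
rewrite (eq_count (a2 := predU (fun Q : {set 'I_n} => x \in Q) (fun Q => y \in Q))); last first.
  by move=> Q; rewrite setI2_neq0.
rewrite inPK // inPK // samePK // !has_count.
apply: arith.
- by move: xI; rewrite /IK inE ltnNge negbK.
- by move: yI; rewrite /IK inE ltnNge negbK.
- by apply: sub_count => Q /andP[].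
- by apply: sub_count => Q /andP[].
- exact: count_predUI.
Qed.

Lemma PK_part K : pure K -> partL (PK K).
Proof.
move=> pK; split => [P|x]; first by rewrite PK_PKs /PKs mem_filter => /andP[].
rewrite PK_PKs /PKs count_filter.
apply: (leq_trans (sub_count (a2 := fun P : {set 'I_n} => x \in P) _ _)).
  by move=> P /andP[].
rewrite count_map -IK_Iset; case: (boolP (x \in IK K)) => xI.
  by rewrite (eq_count (a2 := pred0)) ?count_pred0 // => Q /=; rewrite inE xI.
move: (xI); rewrite inE -leqNgt => c1.
by rewrite (eq_count (a2 := fun Q : {set 'I_n} => x \in Q)) // => Q /=; rewrite inE xI.
Qed.

Lemma PK_U K x : pure K -> x \in bigU (PK K) -> x \notin IK K /\ x \notin K.1.
Proof.
move=> pK; rewrite PK_PKs bigU_PKs in_setD -IK_Iset => /andP[xI].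
by rewrite mem_bigU => /hasP[Q QK xQ]; split => //; exact: notC pK QK xQ.
Qed.

Lemma sameU L P P' x : partL L -> P \in L -> P' \in L -> x \in P -> x \in P' -> P = P'.
Proof.
move=> [_ Hc] PL P'L xP xP'; case: (eqVneq P P') => // ne.
have h1 : (count (predU (pred1 P) (pred1 P')) L <= count (fun Q : {set 'I_n} => x \in Q) L)%N.
  by apply: sub_count => Q /orP[/eqP->|/eqP->].
have h2 := count_predUI (pred1 P) (pred1 P') L.
have h3 : count (predI (pred1 P) (pred1 P')) L = 0%N.
  rewrite (eq_count (a2 := pred0)) ?count_pred0 // => Q /=.
  by case: eqP => //= ->; rewrite (negPf ne).
have h4 : (0 < count (pred1 P) L)%N by rewrite -has_count has_pred1.
have h5 : (0 < count (pred1 P') L)%N by rewrite -has_count has_pred1.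
have := Hc x; lia.
Qed.

Lemma uniqP L : partL L -> uniq L.
Proof.
move=> [H0 Hc]; apply: count_mem_uniq => P; case: (boolP (P \in L)) => PL; last first.
  exact/count_memPn.
have /set0Pn[x xP] := H0 P PL.
have h1 : (count_mem P L <= count (fun Q : {set 'I_n} => x \in Q) L)%N.
  by apply: sub_count => Q /eqP->.
have h4 : (0 < count_mem P L)%N by rewrite -has_count has_pred1.
have := Hc x; rewrite /nat_of_bool; lia.
Qed.

Lemma sameLP L x y : sameL L x y -> exists2 P, P \in L & (x \in P) && (y \in P).
Proof. by move/hasP. Qed.

Lemma sep L x : partL L -> (2 <= size L)%N -> x \in bigU L ->
  exists y, y \in bigU L /\ ~~ sameL L x y.
Proof.
move=> pL s2 xU; have uL := uniqP pL.
have [P1 [P2 [rest eL]]] : exists P1 P2 rest, L = [:: P1, P2 & rest].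
  by case: L s2 {pL uL xU} => [|P1 [|P2 rest]] // _; exists P1, P2, rest.
have ne : P1 != P2.
  by move: uL; rewrite eL /= inE negb_or => /andP[/andP[]].
have P1L : P1 \in L by rewrite eL inE eqxx.
have P2L : P2 \in L by rewrite eL !inE eqxx orbT.
have inU z P : P \in L -> z \in P -> z \in bigU L.
  by move=> PL zP; rewrite mem_bigU; apply/hasP; exists P.
case: (boolP (x \in P1)) => xP1.
  have /set0Pn[y yP2] := pL.1 P2 P2L.
  exists y; split; first exact: inU yP2.
  apply/negP => H; have [P PL /andP[xP yP]] := sameLP H.
  have eP := sameU pL PL P1L xP xP1; rewrite eP in yP.
  by move: ne; rewrite (sameU pL P1L P2L yP yP2) eqxx.
have /set0Pn[y yP1] := pL.1 P1 P1L.
exists y; split; first exact: inU yP1.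
apply/negP => H; have [P PL /andP[xP yP]] := sameLP H.
have eP := sameU pL PL P1L yP yP1.
by move: xP1; rewrite -eP xP.
Qed.

Lemma small L x y : (size L <= 1)%N -> x \in bigU L -> y \in bigU L -> sameL L x y.
Proof.
case: L => [|P [|//]] _; first by rewrite /bigU big_nil inE.
by rewrite /sameL /= bigU_cons /bigU big_nil setU0 orbF => -> ->.
Qed.

Lemma oneway L L' P : partL L -> partL L' -> bigU L = bigU L' ->
  (forall x y, x \in bigU L -> y \in bigU L -> sameL L x y = sameL L' x y) ->
  P \in L -> P \in L'.
Proof.
move=> pL pL' eU Hr PL.
have /set0Pn[x xP] := pL.1 P PL.
have xU : x \in bigU L by rewrite mem_bigU; apply/hasP; exists P.
have := xU; rewrite eU mem_bigU => /hasP[P' P'L xP'].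
suff -> : P = P' by [].
apply/setP => y; apply/idP/idP => yP.
  have yU : y \in bigU L by rewrite mem_bigU; apply/hasP; exists P.
  have : sameL L x y by apply/hasP; exists P => //; rewrite xP yP.
  rewrite Hr // => /hasP[P'' P''L /andP[xP'' yP'']].
  by rewrite -(sameU pL' P''L P'L xP'' xP').
have yU : y \in bigU L by rewrite eU mem_bigU; apply/hasP; exists P'.
have : sameL L' x y by apply/hasP; exists P' => //; rewrite xP' yP.
rewrite -Hr // => /hasP[P'' P''L /andP[xP'' yP'']].
by rewrite -(sameU pL P''L PL xP'' xP).
Qed.

Lemma permL L L' : partL L -> partL L' -> bigU L = bigU L' ->
  (forall x y, x \in bigU L -> y \in bigU L -> sameL L x y = sameL L' x y) ->
  perm_eq L L'.
Proof.
move=> pL pL' eU Hr; apply: uniq_perm; try exact: uniqP.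
move=> P; apply/idP/idP; first exact: oneway.
apply: (oneway pL' pL (esym eU)).
by move=> x y; rewrite -eU => xU yU; rewrite Hr.
Qed.

Section Same.
Variables K K' : CMI n.
Hypotheses (pK : pure K) (pK' : pure K') (eC : K.1 = K'.1) (eI : IK K = IK K')
  (Hv : forall T, vT T K = vT T K').

Lemma vTeq x y : x \notin IK K -> y \notin IK K -> x \notin K.1 -> y \notin K.1 ->
  ~~ [&& x \in bigU (PK K), y \in bigU (PK K) & ~~ sameL (PK K) x y] =
  ~~ [&& x \in bigU (PK K'), y \in bigU (PK K') & ~~ sameL (PK K') x y].
Proof.
move=> xI yI xC yC; rewrite -(vT_pair pK) // -(vT_pair pK') -?eI -?eC //.
Qed.

Lemma mixed : (size (PK K) <= 1)%N -> (2 <= size (PK K'))%N -> False.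
Proof.
move=> s1 s2.
have pL' := PK_part pK'.
have [x xU'] : exists x, x \in bigU (PK K').
  move: s2 (pL'.1); case: (PK K') => [|P [|P2 r]] //= _ H.
  have /set0Pn[x xP] := H P (mem_head _ _); exists x; by rewrite bigU_cons in_setU xP.
have [y [yU' ns']] := sep pL' s2 xU'.
have [xI xC] := PK_U pK' xU'; have [yI yC] := PK_U pK' yU'.
have := vTeq (x:=x) (y:=y); rewrite eI eC xU' yU' ns' /= => /(_ xI yI xC yC).
by case: (x \in bigU (PK K)) (y \in bigU (PK K)) (small s1 (x:=x) (y:=y)) => [] [] //= ->.
Qed.

Lemma union_sub : (2 <= size (PK K))%N -> bigU (PK K) \subset bigU (PK K').
Proof.
move=> s2; apply/fintype.subsetP => x xU; apply/negPn/negP => xU'.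
have [y [yU ns]] := sep (PK_part pK) s2 xU.
have [xI xC] := PK_U pK xU; have [yI yC] := PK_U pK yU.
by have := vTeq xI yI xC yC; rewrite xU yU ns (negPf xU').
Qed.

End Same.

Lemma both2 K K' : pure K -> pure K' -> K.1 = K'.1 -> IK K = IK K' ->
  (forall T, vT T K = vT T K') ->
  (2 <= size (PK K))%N -> (2 <= size (PK K'))%N -> perm_eq (PK K) (PK K').
Proof.
move=> pK pK' eC eI Hv s2 s2'.
have Hv' : forall T, vT T K' = vT T K by move=> T; rewrite Hv.
have eU : bigU (PK K) = bigU (PK K').
  apply/eqP; rewrite eqEsubset (union_sub pK pK' eC eI Hv s2).
  by rewrite (union_sub pK' pK (esym eC) (esym eI) Hv' s2').
apply: (permL (PK_part pK) (PK_part pK') eU).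
move=> x y xU yU.
have [xI xC] := PK_U pK xU; have [yI yC] := PK_U pK yU.
have := vTeq pK pK' eC eI Hv xI yI xC yC; rewrite -eU xU yU /=.
by move=> /negb_inj; case: (sameL _ x y); case: (sameL _ x y).
Qed.

Lemma PK_I0 K : pure K -> IK K = set0 -> PK K = K.2.
Proof.
move=> pK I0; rewrite /PK I0.
rewrite (eq_map (g := id)) ?map_id; last by move=> Q; rewrite setD0.
apply/all_filterP/allP => Q QK; exact: (pureP pK QK).1.
Qed.

Lemma comb K K' : pure K -> pure K' -> (forall T, vT T K = vT T K') ->
  canform_eq (canform K) (canform K').
Proof.
move=> pK pK' Hv.
have Hv' : forall T, vT T K' = vT T K by move=> T; rewrite Hv.
rewrite /canform.
case: (boolP (size K.2 <= 1)%N) => s1; case: (boolP (size K'.2 <= 1)%N) => s1' //=.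
- have e1 : ~: K'.1 :&: K'.1 = set0 by rewrite setIC setICr.
  by have := Hv (~: K'.1); rewrite vT0 // (vT1 pK' e1 (subxx _)) (negPf s1').
- have e1 : ~: K.1 :&: K.1 = set0 by rewrite setIC setICr.
  by have := Hv' (~: K.1); rewrite vT0 // (vT1 pK e1 (subxx _)) (negPf s1).
have s2 : (2 <= size K.2)%N by rewrite ltnNge.
have s2' : (2 <= size K'.2)%N by rewrite ltnNge.
have eC : K.1 = K'.1 by apply/eqP; rewrite eqEsubset !(Csub _ _ _ Hv) ?(Csub _ _ _ Hv').
have eI : IK K = IK K' by apply/eqP; rewrite eqEsubset !(Isub _ _ Hv) ?(Isub _ _ Hv').
rewrite -eI; case: (boolP (IK K == set0)) => I0 /=.
  rewrite /cmi_eq /= eC eqxx /=; apply: both2 => //.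
  - by rewrite PK_I0 //; apply/eqP.
  - by rewrite PK_I0 // -eI; apply/eqP.
case: (boolP (size (PK K) <= 1)%N) => t1; case: (boolP (size (PK K') <= 1)%N) => t1' /=;
  rewrite /cmi_eq /= ?eC ?eqxx //=.
- by case: (mixed pK pK' eC eI Hv t1); rewrite ltnNge.
- by case: (mixed pK' pK (esym eC) (esym eI) Hv' t1'); rewrite ltnNge.
rewrite perm_cons perm_cons; apply: both2 => //; by rewrite ltnNge.
Qed.

End Comb.
Section EsumExtra.
Local Open Scope classical_set_scope.
Local Open Scope ring_scope.
Local Open Scope ereal_scope.
Variable R : realType.

Lemma esum_subset (T : choiceType) (A B : set T) (f : T -> \bar R) :
  (A `<=` B) -> (forall x, B x -> 0 <= f x) ->
  \esum_(x in A) f x <= \esum_(x in B) f x.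
Proof.
move=> AB f0; rewrite esum_mkcond [X in _ <= X]esum_mkcond; apply: le_esum => x _.
case: ifPn => [/set_mem /AB Bx|_]; first by rewrite ifT //; exact: mem_set.
by case: ifPn => // /set_mem /f0.
Qed.

Lemma esumZl (T : choiceType) (S : set T) (c : R) (g : T -> R) : (0 <= c)%R ->
  \esum_(x in S) (c * g x)%:E = c%:E * \esum_(x in S) (g x)%:E.
Proof.
move=> c0; rewrite /esum -ereal_supZl //; last first.
  by apply/set0P; exists (\sum_(x \in classical_sets.set0) (g x)%:E); exists classical_sets.set0 => //; exact: fsets_set0.
rewrite image_comp; congr ereal_sup; apply: eq_imagel => A [finA _] /=.
by rewrite !fsumEFin // -EFinM fsbig_distrr.
Qed.

Lemma esum_part (T S : choiceType) (A : set T) (S' : set S) (g : T -> S) (f : T -> \bar R) :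
  (forall x, A x -> S' (g x)) -> (forall x, A x -> 0 <= f x) ->
  \esum_(x in A) f x = \esum_(s in S') \esum_(x in [set x | A x /\ g x = s]) f x.
Proof.
move=> gA f0; rewrite esum_esum; last by move=> s x _ [Ax _]; exact: f0.
rewrite (reindex_esum A _ (fun x => (g x, x))) //; split.
- by move=> x Ax /=; split; [exact: gA|].
- by move=> x y _ _ [].
- by move=> [s x] /= [S's [Ax <-]]; exists x.
Qed.

Lemma esum_dirac (T : choiceType) (S : set T) (z : T) (c : R) : (0 <= c)%R ->
  \esum_(x in S) (c * (x == z)%:R)%:E = if z \in S then c%:E else 0.
Proof.
move=> c0; rewrite (esumID [set z]); last by move=> x _; rewrite lee_fin mulr_ge0.
rewrite [X in _ + X]esum1 ?adde0; last first.
  by move=> x [_ /= /eqP/negPf ->]; rewrite mulr0.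
case: ifPn => [/set_mem Sz|/negP Sz].
  have -> : S `&` [set z] = [set z] by apply/seteqP; split => [x []//|x /= ->].
  by rewrite esum_set1 ?eqxx ?mulr1 // lee_fin mulr1.
have -> : S `&` [set z] = classical_sets.set0.
  by apply/seteqP; split => [x [Sx /= xz]|x //]; apply: Sz; apply: mem_set; rewrite -xz.
by rewrite esum_set0.
Qed.

End EsumExtra.
Section Ent.
Local Open Scope classical_set_scope.
Local Open Scope ring_scope.
Local Open Scope ereal_scope.
Variables (R : realType) (n : nat) (p : outcome n -> R).
Hypothesis pmf : is_pmf p.
Implicit Types A B D E U Z : {set 'I_n}.

Definition Vs A : set (outcome n) := [set y | forall i, i \notin A -> y i = 0%N].
Definition agr A (y : outcome n) : set (outcome n) :=
  [set x | forall i, i \in A -> x i = y i].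
Definition restr A (x : outcome n) : outcome n :=
  [ffun i => if i \in A then x i else 0%N].
Definition M A y := \esum_(x in agr A y) (p x)%:E.

Lemma p0 x : (0 <= p x)%R. Proof. exact: pmf.1. Qed.

Lemma M_ge0 A y : 0 <= M A y.
Proof. by apply: esum_ge0 => x _; rewrite lee_fin p0. Qed.

Lemma M_le1 A y : M A y <= 1.
Proof.
rewrite -pmf.2; apply: esum_subset => // x _; by rewrite lee_fin p0.
Qed.

Lemma M_fin A y : M A y \is a fin_num.
Proof. by rewrite ge0_fin_numE ?M_ge0 // (le_lt_trans (M_le1 A y)) // ltry. Qed.

Lemma ME A y : M A y = (marg p A y)%:E.
Proof. by rewrite /marg fineK // M_fin. Qed.

Lemma marg_ge0 A y : (0 <= marg p A y)%R.
Proof. by rewrite -lee_fin -ME M_ge0. Qed.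
Lemma marg_le1 A y : (marg p A y <= 1)%R.
Proof. by rewrite -lee_fin -ME M_le1. Qed.

Lemma agr_restr A Z w : Z \subset A -> agr Z (restr A w) = agr Z w.
Proof.
move=> ZA; apply/seteqP; split => x /= H i iZ; rewrite H // ffunE.
  by rewrite (fintype.subsetP ZA).
by rewrite (fintype.subsetP ZA).
Qed.

Lemma marg_restr A Z w : Z \subset A -> marg p Z (restr A w) = marg p Z w.
Proof. by move=> ZA; rewrite /marg -/(agr Z _) -/(agr Z w) agr_restr. Qed.

Lemma restrV A x : Vs A (restr A x).
Proof. by move=> i iA; rewrite ffunE (negPf iA). Qed.

Lemma restr_id A w : Vs A w -> restr A w = w.
Proof. by move=> Vw; apply/ffunP => i; rewrite ffunE; case: ifPn => // /Vw ->. Qed.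

Lemma marg_anti A B w : A \subset B -> (marg p B w <= marg p A w)%R.
Proof.
move=> AB; rewrite -lee_fin -!ME; apply: esum_subset => [x /= H i iA|x _].
  by rewrite H // (fintype.subsetP AB).
by rewrite lee_fin p0.
Qed.

Lemma Mcons D E y : D \subset E -> M D y = \esum_(w in Vs E `&` agr D y) M E w.
Proof.
move=> DE; rewrite /M (esum_part (g := restr E) (S' := Vs E `&` agr D y)); last 2 first.
- move=> x /= Dx; split; first exact: restrV.
  by move=> i iD; rewrite ffunE (fintype.subsetP DE) // Dx.
- by move=> x _; rewrite lee_fin p0.
apply: eq_esum => w [Vw Dw]; congr esum.
apply/seteqP; split => x /=.
  by move=> [Dx <-] i iE; rewrite ffunE iE.
move=> Ex; split.
  by move=> i iD; rewrite Ex ?(fintype.subsetP DE) // Dw.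
by apply/ffunP => i; rewrite ffunE; case: ifPn => [/Ex //|/Vw ->].
Qed.

Definition y0 : outcome n := [ffun=> 0%N].

Lemma agr0 y : agr set0 y = classical_sets.setT.
Proof. by apply/seteqP; split => x // _ i; rewrite in_set0. Qed.

Lemma Msum E : \esum_(w in Vs E) M E w = 1.
Proof.
have := Mcons y0 (sub0set E); rewrite agr0 classical_sets.setIT => <-.
by rewrite /M agr0 pmf.2.
Qed.

Lemma Msum' E : \esum_(w in Vs E) (marg p E w)%:E = 1.
Proof. by rewrite -(Msum E); apply: eq_esum => w _; rewrite ME. Qed.

Lemma fiberE D E y : Vs D y -> [set w | Vs E w /\ restr D w = y] = Vs E `&` agr D y.
Proof.
move=> Vy; apply/seteqP; split => w /=.
  by move=> [Vw <-]; split => // i iD; rewrite ffunE iD.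
move=> [Vw Dw]; split => //; apply/ffunP => i; rewrite ffunE.
by case: ifPn => [/Dw //|/Vy ->].
Qed.

Lemma lift D E (g : outcome n -> R) : D \subset E -> (forall y, (0 <= g y)%R) ->
  \esum_(y in Vs D) (g y)%:E * M D y = \esum_(w in Vs E) (g (restr D w))%:E * M E w.
Proof.
move=> DE g0; symmetry.
rewrite (esum_part (g := restr D) (S' := Vs D)); last 2 first.
- by move=> x _; exact: restrV.
- by move=> x _; rewrite mule_ge0 ?lee_fin ?g0 ?M_ge0.
apply: eq_esum => y Vy; rewrite fiberE // (Mcons y DE).
transitivity (\esum_(w in Vs E `&` agr D y) (g y * marg p E w)%:E).
  apply: eq_esum => w [Vw Dw]; rewrite ME -EFinM; congr ((g _ * _)%:E).
  by apply/ffunP => i; rewrite ffunE; case: ifPn => [/Dw //|/Vy ->].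
by rewrite esumZl ?g0 //; congr (_ * _); apply: eq_esum => w _; rewrite ME.
Qed.

Definition Lg A w := (- ln (marg p A w))%R.

Lemma Lg_ge0 A w : (0 <= Lg A w)%R.
Proof. by rewrite /Lg oppr_ge0 ln_le0 // marg_le1. Qed.

Lemma ent_lift A U : A \subset U ->
  entropy p A = \esum_(w in Vs U) (Lg A w * marg p U w)%:E.
Proof.
move=> AU; rewrite /entropy.
transitivity (\esum_(y in Vs A) (Lg A y)%:E * M A y).
  by apply: eq_esum => y _; rewrite ME -EFinM /Lg mulNr mulrC.
rewrite (lift (g := Lg A) AU (Lg_ge0 A)); apply: eq_esum => w _.
by rewrite ME -EFinM /Lg marg_restr.
Qed.

Lemma ent_ge0 A : 0 <= entropy p A.
Proof.
rewrite (ent_lift (subxx A)); apply: esum_ge0 => w _.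
by rewrite lee_fin mulr_ge0 ?Lg_ge0 ?marg_ge0.
Qed.

Lemma ent0 : entropy p set0 = 0.
Proof.
rewrite /entropy esum1 // => y _.
have -> : marg p set0 y = 1%R by rewrite /marg -/(agr set0 y) agr0 pmf.2.
by rewrite ln1 mulr0 oppr0.
Qed.

Lemma ent_mono A B : A \subset B -> entropy p A <= entropy p B.
Proof.
move=> AB; rewrite (ent_lift AB) (ent_lift (subxx B)); apply: le_esum => w _.
rewrite lee_fin; have [->|mB] := eqVneq (marg p B w) 0%R; first by rewrite !mulr0.
have mBp : (0 < marg p B w)%R by rewrite lt0r mB marg_ge0.
have mAB := marg_anti w AB.
apply: ler_wpM2r; first exact: marg_ge0.
rewrite /Lg lerN2 ler_ln // posrE //; exact: lt_le_trans mAB.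
Qed.

Lemma tpos (mU mA mB mZ : R) : (0 <= mU)%R -> (mU <= mA)%R -> (mU <= mB)%R -> (mA <= mZ)%R ->
  (0 <= - ln mA * mU + - ln mB * mU + mA * mB / mZ - (- ln mU * mU) - (- ln mZ * mU) - mU)%R.
Proof.
move=> h0 h1 h2 h3.
have hA : (0 <= mA)%R by lra.
have hB : (0 <= mB)%R by lra.
have hZ : (0 <= mZ)%R by lra.
have [->|mU0] := eqVneq mU 0%R.
  have := divr_ge0 (mulr_ge0 hA hB) hZ.
  rewrite !mulr0; lra.
have U0 : (0 < mU)%R by rewrite lt0r mU0.
have A0 : (0 < mA)%R by lra.
have B0 : (0 < mB)%R by lra.
have Z0 : (0 < mZ)%R by lra.
set r := (mA * mB / (mU * mZ))%R.
have r0 : (0 < r)%R by rewrite /r divr_gt0 ?mulr_gt0.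
have E1 : ln r = (ln mA + ln mB - ln mU - ln mZ)%R.
  rewrite /r ln_div ?posrE ?mulr_gt0 // !lnM ?posrE //; ring.
have E2 : (mA * mB / mZ = mU * r)%R by rewrite /r; field; rewrite mU0 gt_eqF.
have E3 : (ln r <= r - 1)%R.
  have e : (1 + (r - 1) = r)%R by ring.
  by have := @le_ln1Dx R (r - 1)%R; rewrite e; apply; lra.
have -> : (- ln mA * mU + - ln mB * mU + mA * mB / mZ - (- ln mU * mU) - (- ln mZ * mU) - mU
   = mU * (r - 1 - ln r))%R by rewrite E2 E1; ring.
by rewrite mulr_ge0 //; lra.
Qed.


Lemma qsum A B : \esum_(w in Vs (A :|: B))
  (marg p A w * marg p B w / marg p (A :&: B) w)%:E <= 1.
Proof.
have ZA : A :&: B \subset A := subsetIl A B.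
have ZB : A :&: B \subset B := subsetIr A B.
rewrite (esum_part (g := restr A) (S' := Vs A)); last 2 first.
- by move=> x _; exact: restrV.
- by move=> w _; rewrite lee_fin divr_ge0 ?mulr_ge0 ?marg_ge0.
rewrite -(Msum' A); apply: le_esum => a Va.
set F := [set w | Vs (A :|: B) w /\ restr A w = a].
rewrite (eq_esum (b := fun w => (marg p A a / marg p (A :&: B) a * marg p B w)%:E)); last first.
  by move=> w [Vw <-]; rewrite !marg_restr // mulrAC.
rewrite esumZl ?divr_ge0 ?marg_ge0 //.
have inj : set_inj F (restr B).
  move=> w w' /set_mem [Vw ew] /set_mem [Vw' ew'] eB; apply/ffunP => i.
  case iA: (i \in A).
    by have := congr1 (fun f : outcome n => f i) (etrans ew (esym ew')); rewrite !ffunE iA.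
  case iB: (i \in B).
    by have := congr1 (fun f : outcome n => f i) eB; rewrite !ffunE iB.
  by rewrite Vw ?Vw' // in_setU iA iB.
have bnd : \esum_(w in F) (marg p B w)%:E <= (marg p (A :&: B) a)%:E.
  have -> : \esum_(w in F) (marg p B w)%:E = \esum_(b in restr B @` F) M B b.
    by rewrite esum_image //; apply: eq_esum => w _; rewrite ME marg_restr.
  rewrite -ME (Mcons a ZB); apply: esum_subset => [_ [w [Vw ew] <-]|b _].
    split; first exact: restrV.
    move=> i iZ; rewrite ffunE (fintype.subsetP ZB) //.
    by rewrite -ew ffunE (fintype.subsetP ZA).
  exact: M_ge0.
apply: le_trans (lee_wpmul2l _ bnd) _.
  by rewrite lee_fin divr_ge0 ?marg_ge0.
rewrite -EFinM lee_fin.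
have [->|nz] := eqVneq (marg p (A :&: B) a) 0%R; first by rewrite mulr0 marg_ge0.
by rewrite divfK.
Qed.

Lemma ent_sub A B :
  entropy p (A :|: B) + entropy p (A :&: B) <= entropy p A + entropy p B.
Proof.
set U := A :|: B.
have ZU : A :&: B \subset U by rewrite (fintype.subset_trans (subsetIl A B)) ?subsetUl.
rewrite (ent_lift (subxx U)) (ent_lift ZU) (ent_lift (subsetUl A B)) (ent_lift (subsetUr A B)).
set mU := marg p U.
set q := fun w => (marg p A w * marg p B w / marg p (A :&: B) w)%R.
set t := fun w => (- ln (marg p A w) * mU w + - ln (marg p B w) * mU w +
  marg p A w * marg p B w / marg p (A :&: B) w - (- ln (mU w) * mU w)
  - (- ln (marg p (A :&: B) w) * mU w) - mU w)%R.
have t0 w : (0 <= t w)%R.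
  apply: tpos; first exact: marg_ge0.
  - exact: marg_anti (subsetUl A B).
  - exact: marg_anti (subsetUr A B).
  - exact: marg_anti (subsetIl A B).
have g0 X w : 0 <= (Lg X w * mU w)%:E by rewrite lee_fin mulr_ge0 ?Lg_ge0 ?marg_ge0.
have q0 w : 0 <= (q w)%:E by rewrite lee_fin divr_ge0 ?mulr_ge0 ?marg_ge0.
have E : \esum_(w in Vs U) (Lg A w * mU w)%:E + \esum_(w in Vs U) (Lg B w * mU w)%:E
   + \esum_(w in Vs U) (q w)%:E =
   \esum_(w in Vs U) (t w)%:E + \esum_(w in Vs U) (Lg U w * mU w)%:E
   + \esum_(w in Vs U) (Lg (A :&: B) w * mU w)%:E + \esum_(w in Vs U) (mU w)%:E.
  { rewrite -!esumD //; first (apply: eq_esum => w _; rewrite -!EFinD; congr EFin;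
    by rewrite /t /Lg /q; ring).
  all: move=> w _; repeat apply: adde_ge0;
    first [exact: q0 | exact: g0 | by rewrite lee_fin ?t0 ?marg_ge0]. }
have hE : \esum_(w in Vs U) (mU w)%:E = 1 by exact: Msum'.
rewrite hE in E.
rewrite -(@leeD2rE _ 1) //.
have Et0 : 0 <= \esum_(w in Vs U) (t w)%:E by apply: esum_ge0 => w _; rewrite lee_fin.
apply: (le_trans (y := \esum_(w in Vs U) (t w)%:E + \esum_(w in Vs U) (Lg U w * mU w)%:E
   + \esum_(w in Vs U) (Lg (A :&: B) w * mU w)%:E + 1)).
  by rewrite -!addeA leeDr.
rewrite -E leeD2l //.
exact: qsum.
Qed.


Lemma ent_U A B : entropy p (A :|: B) <= entropy p A + entropy p B.
Proof. by apply: le_trans (ent_sub A B); exact: leeDl (ent_ge0 _). Qed.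

Lemma ent_fin : finite_entropies p -> forall A, entropy p A < +oo.
Proof.
move=> fe A; have -> : A = [set x in enum A] by apply/setP => x; rewrite inE mem_enum.
elim: (enum A) => [|x s IH].
  have -> : [set x in [::]] = set0 :> {set 'I_n} by apply/setP => x; rewrite !inE.
  by rewrite ent0 ltry.
have -> : [set y in x :: s] = [set x] :|: [set y in s].
  by apply/setP => y; rewrite !inE.
exact: le_lt_trans (ent_U _ _) (lte_add_pinfty (fe x) IH).
Qed.

Definition hr A := fine (entropy p A).

Lemma hrE : finite_entropies p -> forall A, entropy p A = (hr A)%:E.
Proof. by move=> fe A; rewrite /hr fineK // ge0_fin_numE ?ent_ge0 ?ent_fin. Qed.

Lemma hr0 : hr set0 = 0%R.
Proof. by rewrite /hr ent0. Qed.

Lemma hr_mono : finite_entropies p -> forall A B, A \subset B -> (hr A <= hr B)%R.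
Proof. by move=> fe A B AB; rewrite -lee_fin -!hrE // ent_mono. Qed.

Lemma hr_sub : finite_entropies p -> forall A B, (hr (A :|: B) + hr (A :&: B) <= hr A + hr B)%R.
Proof. by move=> fe A B; rewrite -lee_fin !EFinD -!hrE // ent_sub. Qed.

End Ent.

Lemma valid_R (R : realType) (n : nat) (p : outcome n -> R) (h : {set 'I_n} -> R) :
  (forall A, entropy p A = (h A)%:E) -> forall K, valid p K <-> validR h K.
Proof.
move=> hE K; rewrite /valid /validR /centropy.
have -> : (\sum_(Q <- K.2) (entropy p (Q :|: K.1) - entropy p K.1))%E =
   (\sum_(Q <- K.2) (h (Q :|: K.1) - h K.1))%:E.
  by rewrite -sumEFin; apply: eq_bigr => Q _; rewrite !hE EFinB.
rewrite !hE -!EFinB; split => [[]|->] //.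
Qed.
Section PT.
Local Open Scope classical_set_scope.
Local Open Scope ring_scope.
Variables (R : realType) (n : nat) (T : {set 'I_n}).

Definition z0 : outcome n := [ffun=> 0%N].
Definition zT : outcome n := [ffun i => nat_of_bool (i \in T)].
Definition pT (x : outcome n) : R := 2^-1 * (x == z0)%:R + 2^-1 * (x == zT)%:R.

Lemma pT_ge0 x : 0 <= pT x.
Proof. by rewrite /pT addr_ge0 // mulr_ge0 // invr_ge0. Qed.

Lemma h2 : (0 <= 2^-1 :> R). Proof. by rewrite invr_ge0. Qed.

Lemma esum_pT (S : set (outcome n)) :
  (\esum_(x in S) (pT x)%:E =
   (if z0 \in S then (2^-1)%:E else 0) + (if zT \in S then (2^-1)%:E else 0))%E.
Proof.
rewrite -!esum_dirac ?h2 // -esumD; last 2 first.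
- by move=> x _; rewrite lee_fin mulr_ge0 ?h2.
- by move=> x _; rewrite lee_fin mulr_ge0 ?h2.
by apply: eq_esum => x _; rewrite -EFinD.
Qed.

Lemma pT_pmf : is_pmf pT.
Proof.
split; first exact: pT_ge0.
rewrite esum_pT !ifT; try by apply: mem_set.
rewrite -EFinD; congr EFin.
by field.
Qed.

Definition agb (A : {set 'I_n}) (y x : outcome n) := [forall i, (i \in A) ==> (x i == y i)].

Lemma agbE A y x : (x \in agr A y) = agb A y x.
Proof.
apply/idP/idP => [/set_mem H|H].
  by apply/forallP => i; apply/implyP => iA; rewrite H.
by apply/mem_set => i iA; have := forallP H i; rewrite iA => /eqP.
Qed.

Lemma margT A y : marg pT A y = 2^-1 * (agb A y z0)%:R + 2^-1 * (agb A y zT)%:R.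
Proof.
rewrite /marg -/(agr A y) esum_pT !agbE.
by case: (agb A y z0); case: (agb A y zT); rewrite /= ?mulr0 ?mulr1 ?addr0 ?add0r // -EFinD.
Qed.

Lemma agb_restr A y z : Vs A y -> agb A y z = (y == restr A z).
Proof.
move=> Vy; apply/idP/eqP => [H|->].
  apply/ffunP => i; rewrite ffunE; case: ifPn => [iA|/Vy //].
  by have := forallP H i; rewrite iA => /eqP.
by apply/forallP => i; apply/implyP => iA; rewrite ffunE iA.
Qed.

Definition phi (u : R) := - (u * ln u).
Definition cT := phi 2^-1 + phi 2^-1.

Lemma phi_gt0 : 0 < phi 2^-1.
Proof.
rewrite /phi oppr_gt0 pmulr_rlt0 ?invr_gt0 // ln_lt0 // invr_gt0 /=.
by apply/andP; split; lra.
Qed.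

Lemma cT_neq0 : cT != 0.
Proof. by rewrite /cT gt_eqF // addr_gt0 // phi_gt0. Qed.

Definition hT (A : {set 'I_n}) : R := cT * (T :&: A != set0)%:R.

Lemma entT A : entropy pT A = (hT A)%:E.
Proof.
rewrite /hT /entropy -/(Vs A); case: (boolP (T :&: A != set0)) => [/set0Pn[i0]|/negPn/eqP TA].
  rewrite inE => /andP[i0T i0A].
  transitivity (\esum_(y in Vs A) ((phi 2^-1 * (y == restr A z0)%:R)%:E +
     (phi 2^-1 * (y == restr A zT)%:R)%:E))%E.
    apply: eq_esum => y Vy; rewrite -EFinD margT -!agb_restr //.
    have nb : ~~ (agb A y z0 && agb A y zT).
      apply/negP => /andP[/forallP/(_ i0) + /forallP/(_ i0)].
      by rewrite i0A /= => /eqP <- /eqP; rewrite !ffunE i0T.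
    move: nb; rewrite -/(phi _).
    case: (agb A y z0); case: (agb A y zT) => //= _;
      rewrite ?mulr0 ?mulr1 ?addr0 ?add0r //.
    by rewrite /phi mul0r oppr0.
  rewrite esumD; last 2 first.
  - by move=> y _; rewrite lee_fin mulr_ge0 ?(ltW phi_gt0).
  - by move=> y _; rewrite lee_fin mulr_ge0 ?(ltW phi_gt0).
  rewrite !esum_dirac ?(ltW phi_gt0) //; last first.
  rewrite !ifT; first by rewrite -EFinD mulr1.
  - by apply: mem_set; exact: restrV.
  - by apply: mem_set; exact: restrV.
rewrite mulr0 esum1 // => y Vy; rewrite margT.
have -> : agb A y zT = agb A y z0.
  apply: eq_forallb => i; case iA: (i \in A) => //=.
  rewrite !ffunE; case iT: (i \in T) => //.
  by move: TA => /setP/(_ i); rewrite !inE iT iA.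
case: (agb A y z0); rewrite /= ?mulr0 ?mulr1 ?addr0.
  have -> : (2^-1 + 2^-1 = 1 :> R) by field.
  by rewrite ln1 mulr0 oppr0.
by rewrite mul0r oppr0.
Qed.

Lemma pT_fin : finite_entropies pT.
Proof. by move=> i; rewrite entT ltry. Qed.

Lemma count_sum (s : seq {set 'I_n}) (b : {set 'I_n} -> bool) :
  \sum_(Q <- s) (b Q)%:R = (count b s)%:R :> R.
Proof.
elim: s => [|Q s IH]; first by rewrite big_nil.
by rewrite big_cons IH /= natrD.
Qed.

Lemma bigU_meet s : (T :&: bigU s != set0) = has (fun Q => T :&: Q != set0) s.
Proof.
elim: s => [|Q s IH]; first by rewrite /bigU big_nil setI0 eqxx.
by rewrite bigU_cons setIUr setU_eq0 negb_and IH.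
Qed.

Lemma natb (k : nat) : ((k%:R : R) == (0 < k)%N%:R) = (k <= 1)%N.
Proof. by rewrite eqr_nat; case: k => [|[|k]]. Qed.

Lemma validT K : validR hT K <-> vT T K.
Proof.
rewrite /validR /vT /hT; case: (boolP (T :&: K.1 != set0)) => TC /=.
  have e X : T :&: (X :|: K.1) != set0.
    apply: contraNN TC => /eqP H; apply/eqP/setP => z; move: H => /setP/(_ z).
    by rewrite !inE; case: (z \in T); case: (z \in K.1); rewrite ?orbT.
  split => // _; rewrite e /= subrr.
  by rewrite big1 ?sub0r ?oppr0 // => Q _; rewrite e subrr.
move: TC => /negPn/eqP TC.
have e X : T :&: (X :|: K.1) = T :&: X by rewrite setIUr TC setU0.
rewrite mulr0 subr0.
under eq_bigr do rewrite e subr0.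
rewrite e -mulr_sumr count_sum bigU_meet has_count -mulrBr.
have key (k : nat) : cT * (k%:R - (0 < k)%N%:R) = 0 <-> (k <= 1)%N.
  split => [/eqP|H].
    by rewrite mulf_eq0 (negPf cT_neq0) /= subr_eq0 natb.
  by apply/eqP; rewrite mulf_eq0; apply/orP; right; rewrite subr_eq0 natb.
exact: key.
Qed.

End PT.

Theorem mainTheorem1 (R : realType) (n : nat) (K K' : CMI n) :
  pure K -> pure K' ->
  (cmi_equiv R K K' <-> canform_eq (canform K) (canform K')).
Proof.
move=> pK pK'; split.
  move=> Heq; apply: comb => // T.
  have HT := Heq (pT R T) (pT_pmf R T) (pT_fin R T).
  have V := valid_R (@entT R n T).
  have W := @validT R n T.
  apply/idP/idP => H.
    by apply/W; apply/V; apply/HT; apply/V; apply/W.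
  by apply/W; apply/V; apply/HT; apply/V; apply/W.
move=> Hc p pmf fe.
have hE := hrE pmf fe.
rewrite !(valid_R hE).
have h0 := hr0 pmf.
have mono := hr_mono pmf fe.
have sub := hr_sub pmf fe.
rewrite (valid_can mono sub K) (valid_can mono sub K').
exact: Vc_eq Hc.
Qed.
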